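(* There is a family of FMSM instances, with ground sets of size $n$ for arbitrarily large $n$, in which $f$ is monotone submodular and $\mathcal{I}$ is a partition matroid, such that $\max_{S \in \mathcal{F}} f(S) = 1$ but there is a point $x \in P_{\mathcal{F}}$ whose multilinear extension value satisfies $F(x) = \Omega(\sqrt{n})$.
   Context: An FMSM instance consists of a ground set $V$ of $n$ elements, a non-negative submodular function $f : 2^V \to \mathbb{R}_{\ge 0}$, a matroid $\mathcal{I} \subseteq 2^V$, a partition of $V$ into color groups $V_1,\dots,V_C$, and integer bounds $0 \le \ell_c \le u_c$. Fair sets: $\mathcal{C} = \{S : \ell_c \le |S \cap V_c| \le u_c\ \forall c\}$; feasible sets $\mathcal{F} = \mathcal{I} \cap \mathcal{C}$. $P_{\mathcal{F}}$ is the convex hull of the indicator vectors $\mathbb{1}_S$, $S \in \mathcal{F}$. The multilinear extension of $f$ is $F(x) = \sum_{S \subseteq V} f(S) \prod_{i \in S} x_i \prod_{j \notin S}(1-x_j)$ for $x \in [0,1]^n$. $f$ is monotone if $f(Y) \le f(X)$ whenever $Y \subseteq X$. A partition matroid is given by a partition of $V$ into blocks $G_i$ with bounds $k_i$, a set $X$ being independent iff $|X \cap G_i| \le k_i$ for all $i$. *)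

(* Defs.v *)
From mathcomp Require Import all_boot all_order all_algebra.
Set Implicit Arguments. Unset Strict Implicit. Unset Printing Implicit Defensive.
Import Order.TTheory GRing.Theory Num.Theory.
Local Open Scope ring_scope.

Section FMSM.
Variable R : rcfType.
Variable n : nat.

Definition nonneg_fun (f : {set 'I_n} -> R) : Prop := forall S, 0 <= f S.

Definition submodular (f : {set 'I_n} -> R) : Prop :=
  forall A B : {set 'I_n}, f (A :|: B) + f (A :&: B) <= f A + f B.

Definition monotone (f : {set 'I_n} -> R) : Prop :=
  forall Y X : {set 'I_n}, Y \subset X -> f Y <= f X.

Definition partition_indep (m : nat) (g : 'I_n -> 'I_m) (k : 'I_m -> nat)
    (X : {set 'I_n}) : bool :=
  [forall i : 'I_m, #|X :&: [set e | g e == i]| <= k i]%N.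

Definition fair (C : nat) (col : 'I_n -> 'I_C) (l u : 'I_C -> nat)
    (X : {set 'I_n}) : bool :=
  [forall c : 'I_C, l c <= #|X :&: [set e | col e == c]| <= u c]%N.

Definition multilinear (f : {set 'I_n} -> R) (x : 'I_n -> R) : R :=
  \sum_(S : {set 'I_n}) f S * (\prod_(i in S) x i) * (\prod_(j in ~: S) (1 - x j)).

Definition in_hull (feas : pred {set 'I_n}) (x : 'I_n -> R) : Prop :=
  exists lam : {set 'I_n} -> R,
    [/\ forall S, 0 <= lam S,
        forall S, ~~ feas S -> lam S = 0,
        \sum_(S : {set 'I_n}) lam S = 1 &
        forall i, x i = \sum_(S : {set 'I_n}) lam S * (i \in S)%:R].

Definition max_over_is (feas : pred {set 'I_n}) (f : {set 'I_n} -> R) (v : R) : Prop :=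
  (exists2 S, feas S & f S = v) /\ (forall S, feas S -> f S <= v).
End FMSM.

(* Main.v *)
Require Import Defs.
From mathcomp Require Import all_boot all_order all_algebra.
From mathcomp Require Import ring lra zify.
Set Implicit Arguments. Unset Strict Implicit. Unset Printing Implicit Defensive.
Import Order.TTheory GRing.Theory Num.Theory.
Local Open Scope ring_scope.

Section Gen.
Variable R : rcfType.

Lemma sum_sets_prod (I : finType) (a b : I -> R) :
  \sum_(S : {set I}) (\prod_(i in S) a i) * (\prod_(i in ~: S) b i)
  = \prod_(i : I) (a i + b i).
Proof.
have -> : \prod_(i : I) (a i + b i) =
   \prod_(i : I) \sum_(j : bool) (if j then a i else b i).
  by apply: eq_bigr => i _; rewrite big_bool /= addrC.
rewrite bigA_distr_bigA /=.
rewrite (reindex (fun f : {ffun I -> bool} => [set i | f i])); last first.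
  exists (fun S : {set I} => [ffun i => i \in S]) => f _.
    by apply/ffunP => i; rewrite ffunE inE.
  by apply/setP => i; rewrite inE ffunE.
apply: eq_bigr => f _.
rewrite [RHS](bigID (fun i => f i)) /=.
congr (_ * _).
  apply: eq_big => [i|i]; first by rewrite inE.
  by rewrite inE => ->.
apply: eq_big => [i|i]; first by rewrite !inE.
by rewrite !inE => /negbTE ->.
Qed.

Lemma multilinear_hit (n : nat) (D : {set 'I_n}) (x : 'I_n -> R) :
  multilinear (fun S => ((S :&: D) != set0)%:R) x
  = 1 - \prod_(i in D) (1 - x i).
Proof.
rewrite /multilinear.
have H1 : \sum_(S : {set 'I_n}) (\prod_(i in S) x i) * (\prod_(i in ~: S) (1 - x i)) = 1.
  rewrite sum_sets_prod; apply: big1 => i _; lra.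
have H2 : \sum_(S : {set 'I_n}) ((S :&: D) == set0)%:R * (\prod_(i in S) x i) * (\prod_(i in ~: S) (1 - x i))
   = \prod_(i in D) (1 - x i).
  transitivity (\sum_(S : {set 'I_n}) (\prod_(i in S) (x i * (i \notin D)%:R)) * (\prod_(i in ~: S) (1 - x i))).
    apply: eq_bigr => S _; congr (_ * _).
    rewrite big_split /= [RHS]mulrC; congr (_ * _).
    case: eqP => [/setP HS|/eqP HS].
      rewrite big1 // => i iS; have := HS i; rewrite !inE iS /= => ->; by [].
    have [i] := set0Pn _ HS; rewrite inE => /andP [iS iD].
    by rewrite (bigD1 i) //= iD mul0r.
  rewrite sum_sets_prod (bigID (fun i => i \in D)) /=.
  rewrite [X in _ * X]big1 ?mulr1; last by move=> i /negbTE ->; rewrite mulr1; lra.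
  by apply: eq_bigr => i ->; rewrite mulr0 add0r.
rewrite -H2 -[X in X - _]H1 -sumrB; apply: eq_bigr => S _.
by case: eqP => _ /=; lra.
Qed.

Lemma bern (a : R) (m : nat) : 0 <= a <= 1 -> (1 - a) ^+ m * (1 + m%:R * a) <= 1.
Proof.
move=> /andP [a0 a1]; elim: m => [|m IH]; first by rewrite expr0 mul0r; lra.
rewrite exprSr -mulrA.
have h0 : 0 <= (1 - a) ^+ m by apply: exprn_ge0; lra.
apply: le_trans IH; rewrite ler_wpM2l //.
rewrite -natr1. have hm : 0 <= (m%:R : R) by apply: ler0n. have hq : 0 <= (m%:R + 1) * a * a by rewrite mulr_ge0 // mulr_ge0 //; lra. nra.
Qed.
End Gen.

Section Constr.
Variable R : rcfType.
Variable k : nat.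
Hypothesis kpos : (0 < k)%N.

Definition T := ('I_k * option ('I_k * bool))%type.
Definition Tb := option ('I_k * 'I_k).
Definition Tc := ('I_k * 'I_k.+1)%type.

Definition blk (t : T) : Tb :=
  match t with (j, None) => None | (j, Some (p, _)) => Some (j, p) end.
Definition colr (t : T) : Tc :=
  match t with
  | (j, None) => (j, ord0)
  | (j, Some (p, false)) => (j, widen_ord (leqnSn k) p)
  | (j, Some (p, true)) => (j, lift ord0 p)
  end.

Definition gg (e : 'I_#|{: T}|) : 'I_#|{: Tb}| := enum_rank (blk (enum_val e)).
Definition cc (e : 'I_#|{: T}|) : 'I_#|{: Tc}| := enum_rank (colr (enum_val e)).
Definition kk (i : 'I_#|{: Tb}|) : nat := 1.
Definition ll (c : 'I_#|{: Tc}|) : nat := if (enum_val c).2 == ord_max then 0 else 1.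
Definition uu (c : 'I_#|{: Tc}|) : nat := 1.

Definition feas (S : {set 'I_#|{: T}|}) : bool := partition_indep gg kk S && fair cc ll uu S.

Definition el (t : T) : 'I_#|{: T}| := enum_rank t.

Lemma el_inj : injective el.
Proof. exact: enum_rank_inj. Qed.

Lemma gg_el t : gg (el t) = enum_rank (blk t).
Proof. by rewrite /gg /el enum_rankK. Qed.
Lemma cc_el t : cc (el t) = enum_rank (colr t).
Proof. by rewrite /cc /el enum_rankK. Qed.

Lemma two_gt1 (U : finType) (A : {set U}) a b : a != b -> a \in A -> b \in A -> (1 < #|A|)%N.
Proof.
move=> ab aA bA; apply: (@leq_trans #|[set a; b]|); first by rewrite cards2 ab.
apply: subset_leq_card.
by apply/subsetP => z; rewrite !inE => /orP [] /eqP ->.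
Qed.

Lemma feas_blk S t1 t2 : feas S -> blk t1 = blk t2 -> el t1 \in S -> el t2 \in S -> t1 = t2.
Proof.
move=> /andP [/forallP H _] b12 i1 i2.
apply/eqP/negPn/negP => ne.
have := H (enum_rank (blk t1)); rewrite /kk leqNgt => /negP; apply.
apply: (@two_gt1 _ _ (el t1) (el t2)).
- by apply: contra ne => /eqP /el_inj ->.
- by rewrite !inE i1 gg_el eqxx.
- by rewrite !inE i2 gg_el b12 eqxx.
Qed.

Lemma feas_col_le S t1 t2 : feas S -> colr t1 = colr t2 -> el t1 \in S -> el t2 \in S -> t1 = t2.
Proof.
move=> /andP [_ /forallP H] b12 i1 i2.
apply/eqP/negPn/negP => ne.
have := H (enum_rank (colr t1)); rewrite /uu => /andP [_]; rewrite leqNgt => /negP; apply.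
apply: (@two_gt1 _ _ (el t1) (el t2)).
- by apply: contra ne => /eqP /el_inj ->.
- by rewrite !inE i1 cc_el eqxx.
- by rewrite !inE i2 cc_el b12 eqxx.
Qed.

Lemma feas_col_ex S (c : Tc) : feas S -> (val c.2 < k)%N -> exists t, colr t = c /\ el t \in S.
Proof.
move=> /andP [_ /forallP H] ck.
have := H (enum_rank c); rewrite /ll enum_rankK.
have -> : (c.2 == ord_max) = false by apply/negbTE; apply: contraTneq ck => ->; rewrite /= ltnn.
move=> /andP [h _]; have [e] := card_gt0P h.
rewrite !inE => /andP [eS /eqP ce].
exists (enum_val e); split; last by rewrite /el enum_valK.
by move: ce; rewrite /cc => /enum_rank_inj.
Qed.

Lemma step S j (p : 'I_k) : feas S -> el (j, Some (p, true)) \in S ->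
  (val p = 0%N /\ el (j, None) \in S) \/
  exists q : 'I_k, (val q).+1 = val p /\ el (j, Some (q, true)) \in S.
Proof.
move=> fS dS.
have upS : el (j, Some (p, false)) \notin S.
  apply/negP => uS.
  by have := @feas_blk S (j, Some (p, true)) (j, Some (p, false)) fS erefl dS uS.
have [t [ct tS]] := feas_col_ex (c := (j, widen_ord (leqnSn k) p)) fS (ltn_ord p).
case: t ct tS => j' [[q b]|] ct tS.
- case: b ct tS => ct tS; move: ct => /= [ej qp]; rewrite ej in tS.
    by right; exists q; split => //; rewrite -qp /bump /= add1n.
  have qp' : q = p by apply: val_inj.
  by rewrite qp' in tS; rewrite tS in upS.
- move: ct => /= [ej p0]; rewrite ej in tS; left; by split.
Qed.

Lemma force S j (p : 'I_k) : feas S -> el (j, Some (p, true)) \in S -> el (j, None) \in S.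
Proof.
move=> fS; move: p.
suff H : forall m (p : 'I_k), val p = m -> el (j, Some (p, true)) \in S -> el (j, None) \in S.
  by move=> p; apply: H.
elim=> [|m IH] p pm dS; case: (step fS dS) => [[_ //]|[q [qp qS]]].
  by rewrite pm in qp.
by apply: (IH q) => //; rewrite pm in qp; case: qp.
Qed.

Definition isdown (j : 'I_k) (t : T) : bool :=
  match t with (j', Some (_, true)) => j' == j | _ => false end.
Definition Dset (j : 'I_k) : {set 'I_#|{: T}|} := [set e | isdown j (enum_val e)].
Definition ff (S : {set 'I_#|{: T}|}) : R := \sum_(j < k) ((S :&: Dset j) != set0)%:R.

Lemma hit_hub S j : feas S -> S :&: Dset j != set0 -> el (j, None) \in S.
Proof.
move=> fS /set0Pn [e]; rewrite !inE => /andP [eS de].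
case E: (enum_val e) de => [j' [[p b]|]] //; case: b E => // E /eqP ej.
apply: (@force S j p fS); rewrite -ej -E /el enum_valK //.
Qed.

Lemma ff_le1 S : feas S -> ff S <= 1.
Proof.
move=> fS; rewrite /ff.
case: (pickP (fun j => S :&: Dset j != set0)) => [j0 hj0 | none].
  rewrite (bigD1 j0) //= hj0 big1 ?addr0 // => j ne.
  case hj : (S :&: Dset j != set0) => //=.
  have := @feas_blk S (j, None) (j0, None) fS erefl (hit_hub fS hj) (hit_hub fS hj0).
  by case=> ej; rewrite ej eqxx in ne.
rewrite big1 ?ler01 // => j _; by rewrite none.
Qed.

Lemma ind_submod (U : finType) (D A B : {set U}) :
  (((A :|: B) :&: D) != set0)%:R + (((A :&: B) :&: D) != set0)%:R
  <= ((A :&: D) != set0)%:R + ((B :&: D) != set0)%:R :> R.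
Proof.
rewrite setIUl setU_eq0 negb_and.
have H : ((A :&: B) :&: D != set0) -> (A :&: D != set0) && (B :&: D != set0).
  move=> /set0Pn [e]; rewrite !inE => /andP [/andP [eA eB] eD].
  by apply/andP; split; apply/set0Pn; exists e; rewrite !inE ?eA ?eB eD.
move: H; case: (A :&: B :&: D != set0); case: (A :&: D != set0); case: (B :&: D != set0) => //= H;
  try (have := H isT; by []); lra.
Qed.

Lemma ff_submod : submodular ff.
Proof.
move=> A B; rewrite /ff -!big_split /=; apply: ler_sum => j _; exact: ind_submod.
Qed.

Lemma ff_mono : monotone ff.
Proof.
move=> Y X YX; rewrite /ff; apply: ler_sum => j _; rewrite ler_nat.
case hY: (Y :&: Dset j != set0) => //=.
move/set0Pn: hY => [e]; rewrite !inE => /andP [eY eD].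
suff -> : X :&: Dset j != set0 by [].
apply/set0Pn; exists e; by rewrite !inE (subsetP YX _ eY) eD.
Qed.

Lemma ff_nonneg : nonneg_fun ff.
Proof. move=> S; rewrite /ff; apply: sumr_ge0 => j _; exact: ler0n. Qed.

Definition inS (j : 'I_k) (t : T) : bool :=
  match t with
  | (j', None) => j' == j
  | (j', Some (_, b)) => if b then j' == j else j' != j
  end.
Definition Sset (j : 'I_k) : {set 'I_#|{: T}|} := [set e | inS j (enum_val e)].

Lemma card_le1_of (U : finType) (A : {set U}) : (forall a b, a \in A -> b \in A -> a = b) -> (#|A| <= 1)%N.
Proof.
move=> H; case: (set_0Vmem A) => [->|[a aA]]; first by rewrite cards0.
rewrite -(cards1 a); apply: subset_leq_card; apply/subsetP => b bA.
by rewrite inE (H _ _ bA aA).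
Qed.

Lemma inS_blk j t1 t2 : inS j t1 -> inS j t2 -> blk t1 = blk t2 -> t1 = t2.
Proof.
case: t1 t2 => j1 [[p1 b1]|] [j2 [[p2 b2]|]] //=.
  move=> h1 h2 [ej pp]; subst j2 p2.
  by case: b1 h1; case: b2 h2 => //=; case: eqP.
by move=> /eqP -> /eqP ->.
Qed.

Lemma inS_col j t1 t2 : inS j t1 -> inS j t2 -> colr t1 = colr t2 -> t1 = t2.
Proof.
case: t1 t2 => j1 [[p1 [|]]|] [j2 [[p2 [|]]|]] /= h1 h2 H; move: (congr1 fst H) (congr1 (fun z => val (snd z)) H) => /= ej pp; subst j2;
  first [ by rewrite (eqP h1) eqxx in h2
        | by rewrite (eqP h2) eqxx in h1
        | by []
        | by move: pp; rewrite /bump /=; lia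
        | (have e : p1 = p2 by apply: val_inj; move: pp; rewrite /bump /=; lia); by rewrite e ].
Qed.

Lemma exists_col j (c : Tc) : (val c.2 < k)%N -> exists t, colr t = c /\ inS j t.
Proof.
case: c => j' [tv tlt] /= tk.
case: (eqVneq j' j) => [->|ne].
  case: tv tlt tk => [|q] tlt tk.
    by exists (j, None); split => //=; congr pair; apply: val_inj.
  exists (j, Some (Ordinal (ltnW tk), true)); split; last by rewrite /= eqxx.
  by congr pair; apply: val_inj.
exists (j', Some (Ordinal tk, false)); split; last by rewrite /= ne.
by congr pair; apply: val_inj.
Qed.

Lemma Sset_feas j : feas (Sset j).
Proof.
apply/andP; split.
  apply/forallP => i; rewrite /kk; apply: card_le1_of => a b.
  rewrite !inE => /andP [aS /eqP ai] /andP [bS /eqP bi].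
  apply: enum_val_inj; apply: (inS_blk aS bS); apply: enum_rank_inj.
  by move: ai bi; rewrite /gg => -> ->.
apply/forallP => c; apply/andP; split; last first.
  rewrite /uu; apply: card_le1_of => a b.
  rewrite !inE => /andP [aS /eqP ai] /andP [bS /eqP bi].
  apply: enum_val_inj; apply: (inS_col aS bS); apply: enum_rank_inj.
  by move: ai bi; rewrite /cc => -> ->.
rewrite /ll; case: eqP => // ne.
have ck : (val (enum_val c).2 < k)%N.
  have := ltn_ord (enum_val c).2; rewrite ltnS leq_eqVlt => /orP [/eqP h|//].
  by case: ne; apply: val_inj.
have [t [ct tS]] := exists_col j ck.
apply/card_gt0P; exists (el t); rewrite !inE /el enum_rankK tS /=.
by rewrite cc_el ct enum_valK.
Qed.

Lemma ff_Sset j : ff (Sset j) = 1.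
Proof.
rewrite /ff (bigD1 j) //= big1 ?addr0.
  suff -> : Sset j :&: Dset j != set0 by [].
  apply/set0Pn; exists (el (j, Some (Ordinal kpos, true))).
  by rewrite !inE /el enum_rankK /= eqxx.
move=> j' ne; case: eqP => // /eqP /set0Pn [e]; rewrite !inE => /andP [].
case: (enum_val e) => j2 [[p [|]]|] //= /eqP -> /eqP ej.
by rewrite ej eqxx in ne.
Qed.

Definition lam (S : {set 'I_#|{: T}|}) : R := \sum_(j < k) (S == Sset j)%:R / k%:R.
Definition xx (e : 'I_#|{: T}|) : R := \sum_(S : {set 'I_#|{: T}|}) lam S * (e \in S)%:R.

Lemma kR : (k%:R : R) != 0.
Proof. by rewrite pnatr_eq0 -lt0n. Qed.

Lemma sum_pred1 (U : finType) (A : U) (F : U -> R) : \sum_(S : U) (S == A)%:R * F S = F A.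
Proof.
rewrite (bigD1 A) //= eqxx mul1r big1 ?addr0 // => S /negbTE ->; by rewrite mul0r.
Qed.

Lemma hull : in_hull feas xx.
Proof.
exists lam; split => //.
- move=> S; apply: sumr_ge0 => j _; apply: divr_ge0; exact: ler0n.
- move=> S nS; apply: big1 => j _; case: eqP => [eS|_]; last by rewrite mul0r.
  by rewrite eS Sset_feas in nS.
- rewrite /lam exchange_big /=.
  transitivity (\sum_(j < k) (1 / k%:R : R)).
    apply: eq_bigr => j _; rewrite -[RHS](sum_pred1 (Sset j) (fun _ => 1 / k%:R)).
    by apply: eq_bigr => S _; rewrite mul1r.
  rewrite sumr_const card_ord; field; exact: kR.
Qed.

Lemma xx_down j (p : 'I_k) : xx (el (j, Some (p, true))) = 1 / k%:R.
Proof.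
rewrite /xx /lam.
transitivity (\sum_(j' < k) ((el (j, Some (p, true)) \in Sset j')%:R / k%:R : R)).
  under eq_bigr do rewrite mulr_suml.
  rewrite exchange_big /=; apply: eq_bigr => j' _.
  rewrite -(sum_pred1 (Sset j') (fun S => (el (j, Some (p, true)) \in S)%:R / k%:R)).
  by apply: eq_bigr => S _; rewrite mulrAC mulrA.
rewrite (bigD1 j) //= big1 ?addr0.
  by rewrite inE /el enum_rankK /= eqxx.
move=> j' ne; rewrite inE /el enum_rankK /=.
by case: eqP => [ej|]; [rewrite ej eqxx in ne | rewrite mul0r].
Qed.

Lemma Dset_img j : Dset j = [set el (j, Some (p, true)) | p : 'I_k].
Proof.
apply/setP => e; rewrite inE; apply/idP/imsetP.
  case E: (enum_val e) => [j' [[p [|]]|]] //= /eqP ej.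
  by exists p => //; rewrite -ej -E /el enum_valK.
by move=> [p _ ->]; rewrite /el enum_rankK /= eqxx.
Qed.

Lemma card_Dset j : #|Dset j| = k.
Proof.
rewrite Dset_img card_imset ?card_ord //.
by move=> p1 p2 /el_inj [].
Qed.

Lemma mult_ff : multilinear ff xx = k%:R * (1 - (1 - 1 / k%:R) ^+ k).
Proof.
transitivity (\sum_(j < k) multilinear (fun S => ((S :&: Dset j) != set0)%:R) xx).
  rewrite /multilinear /ff.
  under eq_bigr do rewrite mulr_suml mulr_suml.
  by rewrite exchange_big.
under eq_bigr do rewrite multilinear_hit.
have hp : forall j, \prod_(i in Dset j) (1 - xx i) = (1 - 1 / k%:R) ^+ k.
  move=> j; transitivity (\prod_(i in Dset j) (1 - 1 / k%:R) : R); last by rewrite prodr_const card_Dset.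
  apply: eq_bigr => i.
  by rewrite Dset_img => /imsetP [p _ ->]; rewrite xx_down.
under eq_bigr do rewrite hp.
by rewrite sumr_const card_ord mulr_natl.
Qed.

Lemma mult_ge : k%:R / 2 <= multilinear ff xx.
Proof.
rewrite mult_ff.
have := @bern R (1 / k%:R) k.
have k0 : 0 < (k%:R : R) by rewrite ltr0n.
have a0 : 0 <= 1 / k%:R :> R by rewrite divr_ge0 // ler0n.
have a1 : 1 / k%:R <= 1 :> R by rewrite ler_pdivrMr // mul1r ler1n.
rewrite a0 a1 => /(_ isT).
have -> : 1 + k%:R * (1 / k%:R) = 2 :> R by field; rewrite lt0r_neq0.
have : 0 <= (1 - 1 / k%:R) ^+ k :> R by apply: exprn_ge0; lra.
set q := (1 - 1 / k%:R) ^+ k.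
move=> q0 h; nra.
Qed.

Lemma gg_surj (i : 'I_#|{: Tb}|) : exists e, gg e = i.
Proof.
case E: (enum_val i) => [[j p]|].
  by exists (el (j, Some (p, false))); rewrite gg_el -[i]enum_valK E.
by exists (el (Ordinal kpos, None)); rewrite gg_el -[i]enum_valK E.
Qed.

Lemma cc_surj (c : 'I_#|{: Tc}|) : exists e, cc e = c.
Proof.
case E: (enum_val c) => [j [[|q] tl]].
  exists (el (j, None)); rewrite cc_el -[c]enum_valK E.
  by congr enum_rank => /=; congr pair; apply: val_inj.
exists (el (j, Some (Ordinal (tl : (q < k)%N), true))); rewrite cc_el -[c]enum_valK E.
by congr enum_rank => /=; congr pair; apply: val_inj.
Qed.

Lemma card_T : #|{: T}| = (k * (k * 2).+1)%N.
Proof. by rewrite card_prod card_option card_prod !card_ord card_bool. Qed.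

Lemma sqrt_bound : Num.sqrt (#|{: T}|%:R : R) <= 2 * k%:R.
Proof.
have h : (#|{: T}| <= (2 * k) ^ 2)%N by rewrite card_T; nia.
have : (#|{: T}|%:R : R) <= (2 * k%:R) ^+ 2.
  have e : (((2 * k) ^ 2)%N%:R : R) = (2 * k%:R) ^+ 2 by rewrite natrX natrM.
  by rewrite -e ler_nat.
rewrite -(ler_sqrt _ (sqr_ge0 _)) sqrtr_sqr ger0_norm //.
by rewrite mulr_ge0 // ler0n.
Qed.
End Constr.

Theorem theorem3p2 (R : rcfType) :
  exists c : R, 0 < c /\
  forall N : nat, exists n : nat, (N <= n)%N /\
  exists (m : nat) (g : 'I_n -> 'I_m) (k : 'I_m -> nat)
         (C : nat) (col : 'I_n -> 'I_C) (l u : 'I_C -> nat)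
         (f : {set 'I_n} -> R) (x : 'I_n -> R),
    (forall i : 'I_m, exists e, g e = i) /\
    (forall c0 : 'I_C, exists e, col e = c0) /\
    (forall c0 : 'I_C, (l c0 <= u c0)%N) /\
    nonneg_fun f /\ submodular f /\ monotone f /\
    max_over_is (fun S => partition_indep g k S && fair col l u S) f 1 /\
    in_hull (fun S => partition_indep g k S && fair col l u S) x /\
    c * Num.sqrt n%:R <= multilinear f x.
Proof.
exists (1 / 4); split; first by rewrite divr_gt0 // ltr0n.
move=> N; pose k := N.+1; have kpos : (0 < k)%N by [].
exists #|{: T k}|; split.
  by rewrite card_T; nia.
exists #|{: Tb k}|, (@gg k), (@kk k), #|{: Tc k}|, (@cc k), (@ll k), (@uu k), (@ff R k), (@xx R k).
split; first exact: gg_surj.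
split; first exact: cc_surj.
split; first by move=> c0; rewrite /ll /uu; case: ifP.
split; first exact: ff_nonneg.
split; first exact: ff_submod.
split; first exact: ff_mono.
split.
  split; last by move=> S fS; apply: ff_le1.
  by exists (Sset (Ordinal kpos)); [apply: Sset_feas | apply: ff_Sset].
split; first exact: hull.
apply: le_trans (mult_ge R kpos).
have := sqrt_bound R kpos.
have k0 : 0 <= (k%:R : R) by apply: ler0n.
set s := Num.sqrt _ => hs.
lra.
Qed.
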